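(* Let $G=(V,E)$ be a unit disk graph, $k$ a positive integer, $Y_k=(V,E_Y)$ its Yao graph and $YS_k=(V,E_{YS})$ the output of the Sink step applied to $Y_k$ (defined in the context). Then for each directed edge $\overrightarrow{uv}\in E_Y$ there is a sequence of vertices $w_0=v,w_1,\dots,w_h=u$, all lying in the cone $K_v(u)$, such that for each $i=1,\dots,h$: $\overrightarrow{w_iw_{i-1}}\in E_{YS}$, $w_i\in K_{w_{i-1}}(u)$, and $\mathrm{ID}(\overrightarrow{w_iw_{i-1}})\le \mathrm{ID}(\overrightarrow{uw_{i-1}})$.
   Context: Unit disk graph: $V$ a finite point set in the plane, $E=\{uv:|uv|\le1\}$ with $|uv|$ Euclidean distance. Cones: with $\theta=2\pi/k$, at each point $x$ the plane is partitioned into $k$ half-open half-closed cones with apex $x$ of angle $\theta$, bounded by $k$ equally spaced rays (same directions at every node); $K_x(y)$ is the cone with apex $x$ containing $y$; $K_x$ denotes an arbitrary such cone. Identifiers: nodes have distinct IDs; $\mathrm{ID}(\overrightarrow{xy})=(|xy|,\mathrm{ID}(x),\mathrm{ID}(y))$ compared lexicographically; $\mathrm{ID}(xy)=\min\{\mathrm{ID}(\overrightarrow{xy}),\mathrm{ID}(\overrightarrow{yx})\}$. Yao step: for each node $x$ and each cone $K_x$ containing the other endpoint of some edge of $E$ incident to $x$, add to $E_Y$ the directed edge $\overrightarrow{xy}$ where $xy$ is such an edge with lowest $\mathrm{ID}(xy)$. Sink step on $(V,E_Y)$: set $E_{YS}=\emptyset$. For each node $v$ and each cone $K_v$: let $I$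 be the set of vertices $x$ with $\overrightarrow{xv}\in E_Y$ and $x\in K_v$; set $I(v)\leftarrow I$ and initialize an ordered sequence $J\leftarrow(v)$ and $T(v)\leftarrow\emptyset$. Repeat until $I$ is empty: remove the first vertex $x$ from $J$; for each cone $K_x$ with apex $x$, let $w\in I(x)\cap K_x$ be the node minimizing $\mathrm{ID}(\overrightarrow{wx})$ (if any), add $\overrightarrow{wx}$ to $T(v)$, move $w$ from $I$ to $J$, and set $I(w)\leftarrow I(x)\cap K_x$. Then add all (directed) edges of $T(v)$ to $E_{YS}$. *)

(* Defs.v *)
From HB Require Import structures.
From mathcomp Require Import all_boot all_order all_algebra.
From mathcomp Require Import boolp reals trigo.
Set Implicit Arguments. Unset Strict Implicit. Unset Printing Implicit Defensive.
Import Order.TTheory GRing.Theory Num.Theory.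
Local Open Scope ring_scope.

Definition dist (R : realType) (a b : R * R) : R :=
  Num.sqrt ((a.1 - b.1) ^+ 2 + (a.2 - b.2) ^+ 2).

(* Cone number j (0 <= j < k) with apex a: the rays are at angles
   alpha + j * (2 pi / k); cone j is the half-open angular sector
   [alpha + j*theta, alpha + (j+1)*theta).  The apex itself belongs to no cone. *)
Definition in_cone (R : realType) (alpha : R) (k : nat) (a : R * R) (j : nat)
  (b : R * R) : bool :=
  `[< exists r phi : R, 0 < r /\
       alpha + j%:R * (2 * pi / k%:R) <= phi /\
       phi < alpha + j.+1%:R * (2 * pi / k%:R) /\
       b = (a.1 + r * cos phi, a.2 + r * sin phi) >].

(* same_cone a b c  <=>  c lies in K_a(b), the cone with apex a containing b. *)
Definition same_cone (R : realType) (alpha : R) (k : nat) (a b c : R * R) : bool :=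
  [exists j : 'I_k, in_cone alpha k a j b && in_cone alpha k a j c].

Definition lexle (R : realType) (x y : R * nat * nat) : bool :=
  (x.1.1 < y.1.1) ||
  ((x.1.1 == y.1.1) && ((x.1.2 < y.1.2)%N || ((x.1.2 == y.1.2) && (x.2 <= y.2)%N))).

Definition dID (R : realType) (T : finType) (p : T -> R * R) (id : T -> nat)
  (x y : T) : R * nat * nat := (dist (p x) (p y), id x, id y).

Definition uID (R : realType) (T : finType) (p : T -> R * R) (id : T -> nat)
  (x y : T) : R * nat * nat :=
  if lexle (dID p id x y) (dID p id y x) then dID p id x y else dID p id y x.

Definition udg_edge (R : realType) (T : finType) (p : T -> R * R) (x y : T) : bool :=
  (x != y) && (dist (p x) (p y) <= 1).

Definition yao_edge (R : realType) (T : finType) (p : T -> R * R) (id : T -> nat)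
  (alpha : R) (k : nat) (x y : T) : bool :=
  udg_edge p x y &&
  [forall y', (udg_edge p x y' && same_cone alpha k (p x) (p y) (p y'))
                ==> lexle (uID p id x y) (uID p id x y')].

(* State of one run of the Sink step for a fixed node v and cone:
   the set I, the sequence J, the map z |-> I(z), and the edge set T(v)
   (directed edge w -> x stored as the pair (w, x)). *)
Record sink_state (T : finType) := SinkState {
  ss_I : {set T};
  ss_J : seq T;
  ss_Imap : T -> {set T};
  ss_T : {set T * T}
}.

Definition sink_cone (R : realType) (T : finType) (p : T -> R * R) (id : T -> nat)
  (alpha : R) (k : nat) (x : T) (st : sink_state T) (j : 'I_k) : sink_state T :=
  let S := ss_Imap st x :&: [set w | in_cone alpha k (p x) j (p w)] in
  match [pick w in S | [forall w' in S, lexle (dID p id w x) (dID p id w' x)]] with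
  | Some w => SinkState (ss_I st :\ w) (rcons (ss_J st) w)
                 (fun z => if z == w then S else ss_Imap st z)
                 ((w, x) |: ss_T st)
  | None => st
  end.

(* One iteration of the "repeat until I is empty" loop (identity once I is
   empty, or if J happens to be empty). Cones are handled in index order. *)
Definition sink_iter (R : realType) (T : finType) (p : T -> R * R) (id : T -> nat)
  (alpha : R) (k : nat) (st : sink_state T) : sink_state T :=
  if ss_I st == set0 then st else
  match ss_J st with
  | [::] => st
  | x :: J' => foldl (sink_cone p id alpha x)
                 (SinkState (ss_I st) J' (ss_Imap st) (ss_T st)) (enum 'I_k)
  end.

Definition sink_init (R : realType) (T : finType) (p : T -> R * R) (id : T -> nat)
  (alpha : R) (k : nat) (v : T) (j : 'I_k) : sink_state T :=
  let I0 := [set x | yao_edge p id alpha k x v && in_cone alpha k (p v) j (p x)] in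
  SinkState I0 [:: v] (fun z => if z == v then I0 else set0) set0.

(* Each iteration pops one element of J, and each
   push into J removes an element from I, so the loop stops after at most
   #|T|.+1 iterations; sink_iter is stationary afterwards. *)
Definition sink_T (R : realType) (T : finType) (p : T -> R * R) (id : T -> nat)
  (alpha : R) (k : nat) (v : T) (j : 'I_k) : {set T * T} :=
  ss_T (iter #|T|.+1 (sink_iter p id alpha k) (sink_init p id alpha v j)).

Definition sink_edge (R : realType) (T : finType) (p : T -> R * R) (id : T -> nat)
  (alpha : R) (k : nat) (x y : T) : bool :=
  [exists v, exists j : 'I_k, (x, y) \in sink_T p id alpha v j].

(* Main.v *)
Require Import Defs.
From HB Require Import structures.
From mathcomp Require Import all_boot all_order all_algebra.
From mathcomp Require Import boolp reals trigo.
From mathcomp Require Import ring lra zify.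
Import Order.TTheory GRing.Theory Num.Theory.
Local Open Scope ring_scope.

Section Geo.
Variables (R : realType) (alpha : R) (k : nat).

Lemma apex_notin (a : R * R) j : ~~ in_cone alpha k a j a.
Proof.
apply/negP => /asboolP [r [phi [r0 [_ [_ E]]]]].
have E1 := congr1 fst E; have E2 := congr1 snd E; simpl in E1, E2.
have h1 : r * cos phi = 0 by apply: (addrI a.1); rewrite addr0 -E1.
have h2 : r * sin phi = 0 by apply: (addrI a.2); rewrite addr0 -E2.
have rn : r != 0 by rewrite gt_eqF.
move/eqP: h1; rewrite mulf_eq0 (negbTE rn) /= => /eqP c0.
move/eqP: h2; rewrite mulf_eq0 (negbTE rn) /= => /eqP s0.
by have := cos2Dsin2 phi; rewrite c0 s0 expr0n /= addr0 => /eqP; rewrite eq_sym oner_eq0.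
Qed.

Lemma cos_eq1_uniq (d : R) : 0 <= d < pi *+ 2 -> cos d = 1 -> d = 0.
Proof.
move=> /andP [d0 d2] c1.
have pi0 := pi_gt0 R.
case: (lerP d pi) => dpi.
  apply: cos_inj; rewrite ?in_itv /= ?d0 ?dpi ?lexx ?(ltW pi0) //.
  by rewrite c1 cos0.
exfalso.
have : cos (pi *+ 2 - d) = 1.
  by rewrite cosB cos2pi sin2pi mul0r addr0 mul1r.
move=> c2.
have : pi *+ 2 - d = 0.
  apply: cos_inj; rewrite ?in_itv /= ?lexx ?(ltW pi0) //; last by rewrite c2 cos0.
  apply/andP; split; first by rewrite subr_ge0 ltW.
  by rewrite mulr2n lerBlDr lerD2l ltW.
by move/eqP; rewrite subr_eq0 => /eqP E; move: d2; rewrite E ltxx.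
Qed.


Lemma angle_uniq (x y : R) : alpha <= x < alpha + pi *+ 2 ->
  alpha <= y < alpha + pi *+ 2 -> cos x = cos y -> sin x = sin y -> x = y.
Proof.
wlog xy : x y / y <= x.
  move=> H hx hy c s; case: (lerP y x) => h; first exact: H.
  by apply/esym/H => //; apply: ltW.
move=> /andP [x1 x2] /andP [y1 y2] c s.
have : x - y = 0.
  apply: cos_eq1_uniq; last by rewrite cosB -c -s cos2Dsin2.
  rewrite subr_ge0 xy /=; lra.
by move/eqP; rewrite subr_eq0 => /eqP.
Qed.

Lemma cone_uniq (a b : R * R) (j j' : nat) : (0 < k)%N -> (j < k)%N -> (j' < k)%N ->
  in_cone alpha k a j b -> in_cone alpha k a j' b -> j = j'.
Proof.
move=> k0 jk j'k /asboolP [r [x [r0 [x1 [x2 E]]]]] /asboolP [r' [y [r'0 [y1 [y2 E']]]]].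
rewrite E in E'.
have E1 := congr1 fst E'; have E2 := congr1 snd E'; simpl in E1, E2.
have h1 : r * cos x = r' * cos y by apply: (addrI a.1).
have h2 : r * sin x = r' * sin y by apply: (addrI a.2).
have rr : r = r'.
  have : r ^+ 2 = r' ^+ 2.
    rewrite -[r ^+ 2]mulr1 -(cos2Dsin2 x) -[r' ^+ 2]mulr1 -(cos2Dsin2 y).
    by rewrite !mulrDr -!exprMn h1 h2.
  by move/eqP; rewrite eqrXn2 // ?ltW // => /eqP.
subst r'.
have rn : r != 0 by rewrite gt_eqF.
have c : cos x = cos y by apply: (mulfI rn).
have s : sin x = sin y by apply: (mulfI rn).
set th := 2 * (pi : R) / k%:R in x1 x2 y1 y2.
have th0 : 0 < th by rewrite divr_gt0 // ?ltr0n // mulr_gt0 // pi_gt0.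
have kth : k%:R * th = pi *+ 2.
  by rewrite /th mulrCA mulfV ?pnatr_eq0 -?lt0n // mulr1 mulr_natl.
have bnd : forall i : nat, (i < k)%N -> i.+1%:R * th <= pi *+ 2.
  by move=> i ik; rewrite -kth; apply: ler_wpM2r; [exact: ltW | rewrite ler_nat].
have xy : x = y.
  apply: angle_uniq.
  - have := bnd _ jk; have : 0 <= j%:R * th by apply: mulr_ge0; [exact: ler0n | exact: ltW].
    move=> *; apply/andP; split; lra.
  - have := bnd _ j'k; have : 0 <= j'%:R * th by apply: mulr_ge0; [exact: ler0n | exact: ltW].
    move=> *; apply/andP; split; lra.
  - exact: c.
  - exact: s.
subst y.
case: (ltngtP j j') => // h; exfalso.
- have : j.+1%:R * th <= j'%:R * th by apply: ler_wpM2r; [exact: ltW | rewrite ler_nat].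
  lra.
- have : j'.+1%:R * th <= j%:R * th by apply: ler_wpM2r; [exact: ltW | rewrite ler_nat].
  lra.
Qed.


Lemma periodic_int (f : R -> R) (T : R) : periodic f T ->
  forall (z : int) x, f (x - z%:~R * T) = f x.
Proof.
move=> P.
have Hn : forall (n : nat) x, f (x + n%:R * T) = f x.
  elim=> [|n IH] x; first by rewrite mul0r addr0.
  by rewrite -[n.+1]addn1 natrD mulrDl mul1r addrA P IH.
case=> n x.
  have -> : (Posz n)%:~R = n%:R :> R by [].
  by rewrite -[in RHS](subrK (n%:R * T) x) Hn.
rewrite NegzE mulrNz mulNr opprK.
by rewrite Hn.
Qed.

Lemma polar_exists (a b : R * R) : a != b ->
  exists r phi : R, 0 < r /\ b = (a.1 + r * cos phi, a.2 + r * sin phi).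
Proof.
case: a b => [a1 a2] [b1 b2] ab /=.
set dx := b1 - a1; set dy := b2 - a2.
have d0 : 0 < dx ^+ 2 + dy ^+ 2.
  rewrite lt_def addr_ge0 ?sqr_ge0 // andbT.
  apply/negP => /eqP h.
  have hx : dx ^+ 2 = 0 by apply/eqP; rewrite eq_le sqr_ge0 andbT -h lerDl sqr_ge0.
  have hy : dy ^+ 2 = 0 by apply/eqP; rewrite eq_le sqr_ge0 andbT -h lerDr sqr_ge0.
  move: ab; rewrite xpair_eqE negb_and.
  move/eqP: hx; rewrite sqrf_eq0 subr_eq0 => /eqP ->.
  by move/eqP: hy; rewrite sqrf_eq0 subr_eq0 => /eqP ->; rewrite !eqxx.
set r := Num.sqrt (dx ^+ 2 + dy ^+ 2).
have r0 : 0 < r by rewrite sqrtr_gt0.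
have r2 : r ^+ 2 = dx ^+ 2 + dy ^+ 2 by rewrite sqr_sqrtr // ltW.
have rn : r != 0 by rewrite gt_eqF.
set c := dx / r.
have c2 : c ^+ 2 <= 1.
  rewrite /c expr_div_n ler_pdivrMr ?exprn_gt0 // mul1r r2 lerDl sqr_ge0 //.
have cb : -1 <= c <= 1.
  have : `|c| ^+ 2 <= 1 by rewrite real_normK ?num_real.
  by rewrite expr_le1 // ler_norml.
set s := Num.sqrt (1 - c ^+ 2).
have s0 : 0 <= s by rewrite sqrtr_ge0.
have rs : r * s = `|dy|.
  have h : (r * s) ^+ 2 = `|dy| ^+ 2.
    rewrite exprMn r2 /s sqr_sqrtr ?subr_ge0 // real_normK ?num_real // /c.
    rewrite mulrBr mulr1 expr_div_n -r2 mulrCA mulfV ?expf_neq0 // mulr1 r2.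
    by rewrite addrC addKr.
  apply/eqP; rewrite -(eqrXn2 (n:=2)) //; first by apply/eqP.
  by apply: mulr_ge0 => //; apply: ltW.
pose phi := if 0 <= dy then acos c else - acos c.
have cphi : cos phi = c.
  by rewrite /phi; case: ifP => _; rewrite ?cosN acosK // in_itv.
have sphi : r * sin phi = dy.
  rewrite /phi; case: ifP => h; rewrite ?sinN sin_acos // -/s ?mulrN rs.
    by rewrite ger0_norm.
  by rewrite ltr0_norm ?opprK // ltNge h.
exists r, phi; split => //.
rewrite sphi cphi /c mulrCA mulfV // mulr1 /dx /dy !subrKC.
by [].
Qed.


Lemma cone_exists (a b : R * R) : (0 < k)%N -> a != b ->
  exists j : 'I_k, in_cone alpha k a j b.
Proof.
move=> k0 ab; have [r [phi0 [r0 E]]] := polar_exists _ _ ab.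
set T := (pi : R) *+ 2.
have T0 : 0 < T by rewrite pmulrn_lgt0 // pi_gt0.
set n := Num.floor ((phi0 - alpha) / T).
set phi := phi0 - n%:~R * T.
have cphi : cos phi = cos phi0 by rewrite /phi periodic_int //; apply: cosD2pi.
have sphi : sin phi = sin phi0 by rewrite /phi periodic_int //; apply: sinD2pi.
have [f1 f2] : n%:~R * T <= phi0 - alpha /\ phi0 - alpha < n%:~R * T + T.
  have /andP [h1 h2] := floor_itv ((phi0 - alpha) / T).
  rewrite -/n in h1 h2; split.
    by move: h1; rewrite ler_pdivlMr.
  by move: h2; rewrite intrD ltr_pdivrMr // mulrDl mul1r.
set th := 2 * (pi : R) / k%:R.
have th0 : 0 < th by rewrite divr_gt0 // ?ltr0n // mulr_gt0 // pi_gt0.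
have kth : k%:R * th = T.
  by rewrite /th mulrCA mulfV ?pnatr_eq0 -?lt0n // mulr1 mulr_natl.
set x := (phi - alpha) / th.
have x0 : 0 <= x by apply: divr_ge0; [rewrite /phi; lra | exact: ltW].
have /andP [j1 j2] := truncn_itv x0.
have jk : (Num.truncn x < k)%N.
  rewrite truncn_lt_nat // /x ltr_pdivrMr // kth /phi; lra.
exists (Ordinal jk); apply/asboolP; exists r, phi; split => //=.
split; first by rewrite -/th; move: j1; rewrite /x ler_pdivlMr //; lra.
split; first by rewrite -/th; move: j2; rewrite /x ltr_pdivrMr //; lra.
by rewrite cphi sphi.
Qed.

End Geo.

Section Lex.
Variable R : realType.
Implicit Types x y z : R * nat * nat.

Lemma lexle_total x y : lexle x y || lexle y x.
Proof.
case: x y => [[a b] c] [[a' b'] c']; rewrite /lexle /=.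
case: (ltgtP a a') => //= _.
case: (ltngtP b b') => //= _.
exact: leq_total.
Qed.

Lemma lexle_trans {y x z} : lexle x y -> lexle y z -> lexle x z.
Proof.
case: x y z => [[a b] c] [[a' b'] c'] [[a'' b''] c'']; rewrite /lexle /=.
case/orP => [h1|/andP [/eqP e1 h1]]; case/orP => [h2|/andP [/eqP e2 h2]].
- by rewrite (lt_trans h1 h2).
- by rewrite -e2 h1.
- by rewrite e1 h2.
- rewrite e1 e2 eqxx ltxx /=; subst.
  case/orP: h1 => [h1|/andP [/eqP e1 h1]]; case/orP: h2 => [h2|/andP [/eqP e2 h2]].
  + by rewrite (ltn_trans h1 h2).
  + by rewrite -e2 h1.
  + by rewrite e1 h2.
  + by rewrite e1 e2 eqxx ltnn (leq_trans h1 h2) orbT.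
Qed.

Lemma exists_min (T : eqType) (f : T -> R * nat * nat) (s : seq T) (x0 : T) :
  x0 \in s -> exists2 w, w \in s & all (fun w' => lexle (f w) (f w')) s.
Proof.
elim: s x0 => // a s IH x0 _.
case: s IH => [|b s] IH.
  exists a; rewrite ?mem_seq1 //= andbT.
  by case/orP: (lexle_total (f a) (f a)).
have [w ws H] := IH b (mem_head _ _).
case/orP: (lexle_total (f a) (f w)) => h.
- exists a; first exact: mem_head.
  apply/allP => y; rewrite in_cons => /orP [/eqP -> | ys].
    by case/orP: (lexle_total (f a) (f a)).
  exact: (lexle_trans h (allP H y ys)).
- exists w; first by rewrite in_cons ws orbT.
  by rewrite /= h.
Qed.

End Lex.

Section Sink.
Variables (R : realType) (T : finType) (p : T -> R * R) (id : T -> nat) (alpha : R) (k : nat).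

Local Notation cone x j y := (in_cone alpha k (p x) j (p y)).
Local Notation scone := (sink_cone p id alpha (k:=k)).
Local Notation siter := (sink_iter p id alpha k).

Definition Sset (st : sink_state T) x (j : 'I_k) :=
  ss_Imap st x :&: [set w | in_cone alpha k (p x) j (p w)].

Lemma pick_min x st (j : 'I_k) :
  (exists w, [/\ w \in Sset st x j,
     (forall w', w' \in Sset st x j -> lexle (dID p id w x) (dID p id w' x)) &
     scone x st j = SinkState (ss_I st :\ w) (rcons (ss_J st) w)
        (fun z => if z == w then Sset st x j else ss_Imap st z) ((w, x) |: ss_T st)])
  \/ (Sset st x j = set0 /\ scone x st j = st).
Proof.
rewrite /sink_cone -/(Sset st x j).
case: pickP => [w /andP [wS /forallP H] | none].
  left; exists w; split => // w' w'S.
  by have := H w'; rewrite w'S.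
right; split => //.
apply/setP => z; rewrite in_set0; apply/negP => zS.
have zE : z \in enum (Sset st x j) by rewrite mem_enum.
have [w ws /allP Hall] := @exists_min R T (fun w => dID p id w x) _ z zE.
have := none w; rewrite -mem_enum ws /=.
suff -> : [forall (w' | w' \in Sset st x j), lexle (dID p id w x) (dID p id w' x)] by [].
apply/forallP => w'; apply/implyP => w'S; apply: Hall; by rewrite mem_enum.
Qed.


Lemma same_coneI a b c (j : 'I_k) : in_cone alpha k a j b -> in_cone alpha k a j c ->
  same_cone alpha k a b c.
Proof. by move=> h1 h2; apply/existsP; exists j; rewrite h1 h2. Qed.

Variables (v : T) (j0 : 'I_k).

Definition I0 := [set x | yao_edge p id alpha k x v && in_cone alpha k (p v) j0 (p x)].

Definition chainP (y : T) (Ts : {set T * T}) (s : seq T) :=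
  forall i, (0 < i <= size s)%N -> let w := nth v (v :: s) in
    [/\ same_cone alpha k (p v) (p y) (p (w i)), (w i, w i.-1) \in Ts,
        same_cone alpha k (p (w i.-1)) (p y) (p (w i)) &
        lexle (dID p id (w i) (w i.-1)) (dID p id y (w i.-1))].

Lemma chain_mono y (Ts Ts' : {set T * T}) s : Ts \subset Ts' -> chainP y Ts s -> chainP y Ts' s.
Proof.
move=> sub H i hi; have [a b c d] := H i hi; split => //; exact: (subsetP sub).
Qed.

Lemma chain_rcons y Ts s w : chainP y Ts s ->
  same_cone alpha k (p v) (p y) (p w) -> (w, last v s) \in Ts ->
  same_cone alpha k (p (last v s)) (p y) (p w) ->
  lexle (dID p id w (last v s)) (dID p id y (last v s)) ->
  chainP y Ts (rcons s w).
Proof.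
move=> H h1 h2 h3 h4 i; rewrite size_rcons => /andP [i0 hi] /=.
have lastE : nth v (v :: s) (size s) = last v s.
  by rewrite -[size s]/((size (v :: s)).-1) nth_last.
rewrite -rcons_cons !nth_rcons /=.
case: (ltngtP i (size s).+1) => hs.
- have := H i; rewrite i0 -ltnS hs => /(_ isT) /=.
  by rewrite ltnS (leq_trans (leq_pred i) _) // -ltnS.
- by move: hi; rewrite leqNgt hs.
- subst i; rewrite /= ltnSn lastE; by split.
Qed.

Definition Good (st : sink_state T) := forall z y, y \in ss_Imap st z ->
  y \in I0 /\ exists s, last v s = z /\ chainP y (ss_T st) s.

Definition Rem (st : sink_state T) := forall y, y \in I0 -> y \notin ss_I st ->
  y \in ss_Imap st y.

Lemma Good_cone x st j : Good st -> Good (scone x st j).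
Proof.
move=> G; case: (pick_min x st j) => [[w [wS wmin ->]] | [_ ->]] //.
move=> z y /=; case: eqP => [-> yS | _ yM].
  have /setIP [yM /[!inE] yc] := yS.
  have /setIP [wM /[!inE] wc] := wS.
  have [yI [s [ls ch]]] := G x y yM.
  have [wI _] := G x w wM.
  split; first by move: yI; rewrite inE.
  exists (rcons s w); split; first by rewrite last_rcons.
  apply: chain_rcons; rewrite ?ls.
  - apply: chain_mono ch; exact: subsetUr.
  - move: yI wI; rewrite !inE => /andP [_ h1] /andP [_ h2]; exact: same_coneI h1 h2.
  - by rewrite setU11.
  - exact: same_coneI yc wc.
  - exact: wmin.
have [yI [s [ls ch]]] := G z y yM.
split => //; exists s; split => //; apply: chain_mono ch; exact: subsetUr.
Qed.

Lemma Rem_cone x st j : Rem st -> Rem (scone x st j).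
Proof.
move=> Rm; case: (pick_min x st j) => [[w [wS wmin ->]] | [_ ->]] //.
move=> y yI /=; rewrite in_setD1 negb_and negbK; case: eqP => [-> | ne] //= yn.
exact: Rm.
Qed.


Hypothesis capex : forall x (j : 'I_k), ~~ cone x j x.
Hypothesis cuniq : forall x y (j j' : 'I_k), cone x j y -> cone x j' y -> j = j'.
Hypothesis cex : forall x y, x != y -> exists j : 'I_k, cone x j y.

Definition D (st : sink_state T) y := ss_Imap st y :\ y.
Definition Rset (st : sink_state T) x (rem : seq 'I_k) :=
  [set z in ss_Imap st x | has (fun j : 'I_k => cone x j z) rem].
Definition mu (st : sink_state T) := (#|ss_I st| + size (ss_J st))%N.

Definition FINV x rem (st : sink_state T) :=
  [/\ uniq rem, uniq (ss_J st), (forall y, y \in ss_J st -> y \notin ss_I st),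
      x \notin ss_J st & 
  [/\ (forall y, y \in ss_J st -> D st y \subset ss_I st),
      Rset st x rem \subset ss_I st,
      (forall z, z \in ss_I st -> has (fun y => z \in D st y) (ss_J st) || (z \in Rset st x rem)),
      (forall y1 y2 z, y1 \in ss_J st -> y2 \in ss_J st -> y1 != y2 ->
          z \in D st y1 -> z \in D st y2 -> False) &
      (forall y z, y \in ss_J st -> z \in D st y -> z \in Rset st x rem -> False)]].

Lemma Rset_cons st x (j : 'I_k) rem z : z \in Rset st x (j :: rem) = (z \in Sset st x j) || (z \in Rset st x rem).
Proof.
rewrite /Rset /Sset !inE /=.
by case: (z \in ss_Imap st x); case: (cone x j z).
Qed.

Lemma Rset_nj {st x} {j : 'I_k} {rem z} : uniq (j :: rem) -> cone x j z -> z \in Rset st x rem -> False.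
Proof.
move=> /andP [jr _] c; rewrite inE => /andP [_ /hasP [j' j'r c']].
by move: jr; rewrite -(cuniq _ _ _ _ c' c) j'r.
Qed.

Lemma FINV_step {x} {j : 'I_k} {rem st} : FINV x (j :: rem) st ->
  FINV x rem (scone x st j) /\ mu (scone x st j) = mu st.
Proof.
case=> ur uJ JI xJ [DI RI IDR disj DR].
have ur' : uniq rem by case/andP: ur.
case: (pick_min x st j) => [[w [wS wmin ->]] | [S0 ->]]; last first.
  have RE : forall z, z \in Rset st x (j :: rem) -> z \in Rset st x rem.
    by move=> z; rewrite Rset_cons S0 in_set0.
  have ER : forall z, z \in Rset st x rem -> z \in Rset st x (j :: rem).
    by move=> z zr; rewrite Rset_cons zr orbT.
  split => //; split => //; split => //.
  - by apply/subsetP => z /ER /(subsetP RI).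
  - move=> z /IDR /orP [->|/RE ->] //; by rewrite orbT.
  - by move=> y z yJ zD /ER; apply: DR yJ zD.
have /setIP [wM /[!inE] wc] := wS.
have wR : w \in Rset st x (j :: rem) by rewrite Rset_cons wS.
have wI : w \in ss_I st := subsetP RI _ wR.
have wJ : w \notin ss_J st by apply/negP => /JI; rewrite wI.
have wx : (x == w) = false.
  by apply/negP => /eqP xw; move: (capex x j); rewrite {2}xw wc.
set st' := SinkState _ _ _ _.
have DJ : forall y, y \in ss_J st -> D st' y = D st y.
  by move=> y yJ; rewrite /D /=; case: eqP => // yw; move: wJ; rewrite -yw yJ.
have Dw : D st' w = Sset st x j :\ w by rewrite /D /= eqxx.
have RR : Rset st' x rem = Rset st x rem by rewrite /Rset /= wx.
have SR : forall z, z \in Sset st x j -> z \in Rset st x (j :: rem).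
  by move=> z zS; rewrite Rset_cons zS.
have RR' : forall z, z \in Rset st x rem -> z \in Rset st x (j :: rem).
  by move=> z zr; rewrite Rset_cons zr orbT.
split; last by rewrite /mu /= size_rcons (cardsD1 w (ss_I st)) wI addSnnS.
split => //=.
- by rewrite rcons_uniq wJ.
- move=> y; rewrite mem_rcons in_cons in_setD1 => /orP [/eqP ->|/JI /negbTE ->]; first by rewrite eqxx.
  by rewrite andbF.
- by rewrite mem_rcons in_cons wx.
split.
- move=> y; rewrite mem_rcons in_cons => /orP [/eqP ->|yJ].
    rewrite Dw; apply/subsetP => z /setD1P [zw /SR zR].
    by rewrite in_setD1 zw (subsetP RI).
  rewrite (DJ _ yJ); apply/subsetP => z zD; rewrite in_setD1 (subsetP (DI _ yJ) _ zD) andbT.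
  by apply/eqP => zw; subst z; apply: (DR _ _ yJ zD wR).
- rewrite RR; apply/subsetP => z zr; rewrite in_setD1 (subsetP RI _ (RR' _ zr)) andbT.
  by apply/eqP => zw; subst z; apply: (Rset_nj ur wc zr).
- move=> z /setD1P [zw zI]; rewrite RR has_rcons.
  case/orP: (IDR z zI) => [/hasP [y yJ zD]|].
    by apply/orP; left; apply/orP; right; apply/hasP; exists y => //; rewrite DJ.
  rewrite Rset_cons => /orP [zS|->]; last by rewrite !orbT.
  by rewrite Dw in_setD1 zw zS.
- move=> y1 y2 z; rewrite !mem_rcons !in_cons.
  have H : forall y, y \in ss_J st -> z \in D st' w -> z \in D st' y -> False.
    move=> y yJ; rewrite Dw DJ // => /setD1P [_ zS] zD.
    exact: (DR _ _ yJ zD (SR _ zS)).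
  case/orP => [/eqP ->|y1J]; case/orP => [/eqP ->|y2J]; rewrite ?eqxx //.
  + by move=> _; apply: H.
  + by move=> _ a b; apply: (H _ y1J b a).
  + by move=> ne; rewrite !DJ //; apply: disj.
- move=> y z; rewrite mem_rcons in_cons RR => /orP [/eqP ->|yJ].
    rewrite Dw => /setD1P [_ /setIP [_ zc]] zr; rewrite inE in zc.
    exact: (Rset_nj ur zc zr).
  by rewrite DJ // => zD zr; apply: (DR _ _ yJ zD (RR' _ zr)).
Qed.

Lemma FINV_fold {x rem st} : FINV x rem st ->
  FINV x [::] (foldl (scone x) st rem) /\ mu (foldl (scone x) st rem) = mu st.
Proof.
elim: rem st => [|j rem IH] st H //=.
have [H1 m1] := FINV_step H.
have [H2 m2] := IH _ H1.
by split => //; rewrite m2.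
Qed.

Definition INV (st : sink_state T) :=
  [/\ uniq (ss_J st), (forall y, y \in ss_J st -> y \notin ss_I st),
      (forall y, y \in ss_J st -> D st y \subset ss_I st),
      (forall z, z \in ss_I st -> has (fun y => z \in D st y) (ss_J st)) &
      (forall y1 y2 z, y1 \in ss_J st -> y2 \in ss_J st -> y1 != y2 ->
          z \in D st y1 -> z \in D st y2 -> False)].

Lemma INV_iter {st} : INV st -> ss_I st != set0 ->
  INV (siter st) /\ (mu (siter st)).+1 = mu st.
Proof.
case=> uJ JI DI ID disj ne; rewrite /sink_iter (negbTE ne).
have [z zI] := set0Pn _ ne.
case EJ : (ss_J st) uJ JI DI ID disj => [|x J'] uJ JI DI ID disj.
  by have := ID z zI.
set st1 := SinkState (ss_I st) J' (ss_Imap st) (ss_T st).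
have D1 : forall y, D st1 y = D st y by [].
have xJ' : x \notin J' by case/andP: uJ.
have F1 : FINV x (enum 'I_k) st1.
  have RD : forall z, z \in Rset st1 x (enum 'I_k) -> z \in D st x.
    move=> y; rewrite inE => /andP [yM /hasP [j _ c]].
    rewrite /D in_setD1 yM andbT; apply/eqP => yx; subst y.
    by move: (capex x j); rewrite c.
  split => //=.
  - exact: enum_uniq.
  - by case/andP: uJ.
  - by move=> y yJ; apply: JI; rewrite in_cons yJ orbT.
  split => //=.
  - by move=> y yJ; apply: DI; rewrite in_cons yJ orbT.
  - apply/subsetP => y /RD; apply/subsetP/DI; exact: mem_head.
  - move=> y yI; have := ID y yI; rewrite /= => /orP [yD|->] //.
    apply/orP; right; rewrite inE.
    move: yD; rewrite /D in_setD1 => /andP [yx yM]; rewrite yM /=.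
    have xy : x != y by rewrite eq_sym.
    have [j c] := cex x y xy.
    by apply/hasP; exists j => //; rewrite mem_enum.
  - move=> y1 y2 w y1J y2J; apply: disj; by rewrite in_cons ?y1J ?y2J orbT.
  - move=> y w yJ wD /RD wx; apply: (disj y x w) => //; first by rewrite in_cons yJ orbT.
      exact: mem_head.
    by apply/eqP => yx; move: xJ'; rewrite -yx yJ.
have [[_ uJ2 JI2 _ [DI2 _ ID2 disj2 _]] m2] := FINV_fold F1.
split.
  split => // y yI; have := ID2 y yI; rewrite orbC inE /=; by rewrite andbF.
by rewrite m2 /mu /= EJ addnS.
Qed.

Lemma siter_pres (P : sink_state T -> Prop) :
  (forall x st j, P st -> P (scone x st j)) ->
  (forall st J, P st -> P (SinkState (ss_I st) J (ss_Imap st) (ss_T st))) ->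
  forall st, P st -> P (siter st).
Proof.
move=> Hc HJ st Pst; rewrite /sink_iter; case: ifP => // _.
case: (ss_J st) => // x J'.
have : P (SinkState (ss_I st) J' (ss_Imap st) (ss_T st)) by apply: HJ.
elim: (enum 'I_k) (SinkState _ _ _ _) => //= j l IH st0 H.
by apply: IH; apply: Hc.
Qed.

Lemma iter_pres (P : sink_state T -> Prop) :
  (forall st, P st -> P (siter st)) -> forall n st, P st -> P (iter n siter st).
Proof. by move=> H; elim=> //= n IH st Pst; apply: H; apply: IH. Qed.

Definition st0 := sink_init p id alpha v j0.

Lemma vI0 : v \notin I0.
Proof. by rewrite inE /yao_edge /udg_edge eqxx. Qed.

Lemma INV0 : INV st0.
Proof.
split => //=.
- by move=> y; rewrite mem_seq1 => /eqP ->; exact: vI0.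
- move=> y; rewrite mem_seq1 => /eqP ->; rewrite /D /= eqxx; exact: subD1set.
- move=> z zI; rewrite /= orbF /D /= eqxx in_setD1 zI andbT.
  by apply/eqP => zv; subst z; move: vI0; rewrite /I0 zI.
- by move=> y1 y2 z; rewrite !mem_seq1 => /eqP -> /eqP ->; rewrite eqxx.
Qed.

Lemma terminates : ss_I (iter #|T|.+1 siter st0) = set0.
Proof.
have H : forall n, INV (iter n siter st0) /\
   (ss_I (iter n siter st0) != set0 -> (mu (iter n siter st0) + n = mu st0)%N).
  elim=> [|n [I1 I2]]; first by split; [exact: INV0 | rewrite addn0].
  rewrite /=; case: (boolP (ss_I (iter n siter st0) == set0)) => e.
    by rewrite /sink_iter e; split => //; rewrite e.
  have [I3 m3] := INV_iter I1 e.
  by split => // _; rewrite -(I2 e) -m3 addnS.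
have [_ H2] := H #|T|.+1.
apply/eqP; apply: contraT => ne; have := H2 ne.
have : (0 < #|ss_I (iter #|T|.+1 siter st0)|)%N by rewrite card_gt0.
have : (mu st0 <= #|T|.+1)%N by rewrite /mu /= addn1 ltnS max_card.
rewrite /mu; lia.
Qed.

Lemma Good0 : Good st0.
Proof.
move=> z y /=; case: eqP => [-> yI|]; last by rewrite in_set0.
split => //; exists [::]; split => // i /andP [a b]; exfalso; move: a b; rewrite /=; lia.
Qed.

Lemma Rem0 : Rem st0.
Proof. by move=> y yI; rewrite /= -/I0 yI. Qed.

Lemma main_sec (u : T) : u \in I0 ->
  exists s, last v s = u /\ chainP u (sink_T p id alpha v j0) s.
Proof.
move=> uI.
have G := @iter_pres Good (@siter_pres Good Good_cone (fun st J H => H)) #|T|.+1 _ Good0.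
have Rm := @iter_pres Rem (@siter_pres Rem Rem_cone (fun st J H => H)) #|T|.+1 _ Rem0.
move: (Rm u uI); rewrite terminates in_set0 => /(_ isT) uM.
by have [_ H] := G u u uM.
Qed.

End Sink.


Theorem lemma2 (R : realType) (T : finType) (p : T -> R * R) (id : T -> nat)
  (alpha : R) (k : nat) :
  injective p -> injective id -> (0 < k)%N ->
  forall u v : T, yao_edge p id alpha k u v ->
  exists s : seq T, last v s = u /\
    forall i : nat, (0 < i <= size s)%N ->
      let w := nth v (v :: s) in
      [/\ same_cone alpha k (p v) (p u) (p (w i)),
          sink_edge p id alpha k (w i) (w i.-1),
          same_cone alpha k (p (w i.-1)) (p u) (p (w i)) &
          lexle (dID p id (w i) (w i.-1)) (dID p id u (w i.-1))].
Proof.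
move=> pinj _ k0 u v yuv.
have capex : forall x (j : 'I_k), ~~ in_cone alpha k (p x) j (p x).
  by move=> x j; apply: apex_notin.
have cuniq : forall x y (j j' : 'I_k), in_cone alpha k (p x) j (p y) ->
    in_cone alpha k (p x) j' (p y) -> j = j'.
  by move=> x y j j' h1 h2; apply: val_inj; exact: (@cone_uniq R alpha k (p x) (p y) j j' k0 (ltn_ord j) (ltn_ord j') h1 h2).
have cex : forall x y, x != y -> exists j : 'I_k, in_cone alpha k (p x) j (p y).
  move=> x y xy; apply: cone_exists => //.
  by apply/eqP => /pinj e; move: xy; rewrite e eqxx.
have uv : v != u.
  by apply/eqP => e; move: yuv; rewrite /yao_edge /udg_edge e eqxx.
have [j0 c0] := cex v u uv.
have uI : u \in @I0 R T p id alpha k v j0 by rewrite inE yuv c0.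
have [s [ls ch]] := @main_sec R T p id alpha k v j0 capex cuniq cex u uI.
exists s; split => // i hi /=.
have [a b c d] := ch i hi; split => //.
by apply/existsP; exists v; apply/existsP; exists j0.
Qed.
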